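(* Let $\Omega\subset\mathbb R^2$ be a bounded domain and let $u\in C^{2,1}(\bar\Omega\times[0,\infty))$ satisfy $E_2[u]:=-u_t\,\Delta u+\det u_{xx}>0$ on $\bar\Omega\times[0,\infty)$. Let $\mathbf u\in C^2(\bar\Omega)$ be strictly convex on $\bar\Omega$ (i.e. $\mathbf u_{xx}(x)$ is positive definite for every $x\in\bar\Omega$). Assume that there is a point $x_0\in\Omega$ with $\Delta u(x_0,0)>0$, that $\sup_{x\in\partial\Omega}|u(x,t)-\mathbf u(x)|\to0$ as $t\to\infty$, and that $\sup_{x\in\bar\Omega}|E_2[u](x,t)-\det\mathbf u_{xx}(x)|\to0$ as $t\to\infty$. Then $\sup_{x\in\bar\Omega}|u(x,t)-\mathbf u(x)|\to0$ as $t\to\infty$.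
   Context: $u_{xx}$ denotes the Hessian matrix of $u$ in the space variables $x=(x_1,x_2)$, and $u_t$ the time derivative. $C^{2,1}$ means twice continuously differentiable in $x$ and once continuously differentiable in $t$. The limits in the hypotheses and conclusion are understood uniformly in $x$. *)

(* Defs.v *)
From Stdlib Require Import Reals.
Open Scope R_scope.

Definition pt : Type := (R * R)%type.

Definition ball_sq (x y : pt) (e : R) : Prop :=
  Rabs (fst y - fst x) < e /\ Rabs (snd y - snd x) < e.

Definition open2 (S : pt -> Prop) : Prop :=
  forall x, S x -> exists e, 0 < e /\ forall y, ball_sq x y e -> S y.

Definition connected2 (S : pt -> Prop) : Prop :=
  ~ exists A B : pt -> Prop,
      open2 A /\ open2 B /\
      (forall x, S x -> A x \/ B x) /\
      (exists x, S x /\ A x) /\ (exists x, S x /\ B x) /\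
      (forall x, S x -> A x -> B x -> False).

Definition bounded2 (S : pt -> Prop) : Prop :=
  exists M, forall x, S x -> Rabs (fst x) <= M /\ Rabs (snd x) <= M.

Definition bounded_domain (S : pt -> Prop) : Prop :=
  (exists x, S x) /\ open2 S /\ connected2 S /\ bounded2 S.

Definition closure2 (S : pt -> Prop) (x : pt) : Prop :=
  forall e, 0 < e -> exists y, S y /\ ball_sq x y e.

Definition boundary2 (S : pt -> Prop) (x : pt) : Prop :=
  closure2 S x /\ ~ S x.

Definition cont_on2 (S : pt -> Prop) (f : pt -> R) : Prop :=
  forall x, S x -> forall e, 0 < e -> exists d, 0 < d /\
    forall y, S y -> ball_sq x y d -> Rabs (f y - f x) < e.

Definition cont_on3 (S : pt -> R -> Prop) (f : pt -> R -> R) : Prop :=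
  forall x t, S x t -> forall e, 0 < e -> exists d, 0 < d /\
    forall y s, S y s -> ball_sq x y d -> Rabs (s - t) < d ->
      Rabs (f y s - f x t) < e.

Definition d1_is (g : pt -> R) (x : pt) (l : R) : Prop :=
  derivable_pt_lim (fun s => g (s, snd x)) (fst x) l.
Definition d2_is (g : pt -> R) (x : pt) (l : R) : Prop :=
  derivable_pt_lim (fun s => g (fst x, s)) (snd x) l.

(* u in C^2(closure S): derivatives in S extend continuously to closure S.
   Given u and candidate derivatives u1 u2 u11 u12 u22. *)
Definition C2_closure (S : pt -> Prop)
    (u u1 u2 u11 u12 u22 : pt -> R) : Prop :=
  (forall x, S x ->
     d1_is u x (u1 x) /\ d2_is u x (u2 x) /\
     d1_is u1 x (u11 x) /\ d2_is u1 x (u12 x) /\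
     d1_is u2 x (u12 x) /\ d2_is u2 x (u22 x)) /\
  cont_on2 (closure2 S) u /\ cont_on2 (closure2 S) u1 /\
  cont_on2 (closure2 S) u2 /\ cont_on2 (closure2 S) u11 /\
  cont_on2 (closure2 S) u12 /\ cont_on2 (closure2 S) u22.

(* u in C^{2,1}(closure S x [0,oo)): derivatives (twice in x, once in t)
   exist in S x (0,oo) and extend continuously to closure S x [0,oo). *)
Definition C21_closure (S : pt -> Prop)
    (u ut u1 u2 u11 u12 u22 : pt -> R -> R) : Prop :=
  (forall x t, S x -> 0 < t ->
     derivable_pt_lim (fun s => u x s) t (ut x t) /\
     d1_is (fun y => u y t) x (u1 x t) /\ d2_is (fun y => u y t) x (u2 x t) /\
     d1_is (fun y => u1 y t) x (u11 x t) /\ d2_is (fun y => u1 y t) x (u12 x t) /\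
     d1_is (fun y => u2 y t) x (u12 x t) /\ d2_is (fun y => u2 y t) x (u22 x t)) /\
  (let D := fun x t => closure2 S x /\ 0 <= t in
   cont_on3 D u /\ cont_on3 D ut /\ cont_on3 D u1 /\ cont_on3 D u2 /\
   cont_on3 D u11 /\ cont_on3 D u12 /\ cont_on3 D u22).

(* symmetric 2x2 matrix [[a, b], [b, c]] is positive definite *)
Definition pos_def2 (a b c : R) : Prop :=
  forall v1 v2, (v1 <> 0 \/ v2 <> 0) ->
    0 < a * v1 * v1 + 2 * b * v1 * v2 + c * v2 * v2.

(* Main.v *)
Require Import Defs.
From Stdlib Require Import Reals.
From Stdlib Require Import Lra Lia Psatz Classical ClassicalEpsilon.
From mathcomp Require all_boot all_order all_algebra all_classical all_reals all_analysis Rstruct Rstruct_topology.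

Module BWM.
Import all_boot all_order all_algebra all_classical all_reals all_analysis Rstruct Rstruct_topology.
Import Order.TTheory GRing.Theory Num.Theory.
Lemma BW_R (u : nat -> R) (M : R) : (forall n, Rle (Rabs (u n)) M) ->
  exists f : nat -> nat, (forall n, lt (f n) (f (S n))) /\
  exists l, forall eps, Rlt 0 eps -> exists N, forall n, le N n ->
     Rlt (Rabs (Rminus (u (f n)) l)) eps.
Proof.
move=> HM.
have bnd : bounded_fun (u : nat -> R^o).
  exists M; split; first exact: num_real.
  move=> x Mx n _ /=. rewrite -RabsE. apply: le_trans (ltW Mx). apply/RleP. exact: HM.
have [f incf cvf] := @bolzano_weierstrass R u bnd.
exists f; split.
  move=> n. apply/ssrnat.ltP. by rewrite (leqW_mono incf) ltnSn.
set l := limn (u \o f). have Hl := cvf.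
exists l => eps /RltP eps0.
have := (@cvgrPdist_lt _ R^o _ _ _ (u \o f) l).1 Hl eps eps0.
case => N _ HN. exists N => n /ssrnat.leP Nn.
have := HN n Nn. rewrite /= -RabsE => /RltP.
by rewrite Rabs_minus_sym.
Qed.
End BWM.

Open Scope R_scope.

Lemma dlim_ext f g x l : (forall y, f y = g y) -> derivable_pt_lim f x l -> derivable_pt_lim g x l.
Proof. intros H D eps He. destruct (D eps He) as [d Hd]. exists d. intros h Hh Hhd. rewrite <- !H. auto. Qed.

Lemma dlim_cont f x l : derivable_pt_lim f x l ->
  forall e, 0 < e -> exists d, 0 < d /\ forall y, Rabs (y - x) < d -> Rabs (f y - f x) < e.
Proof.
  intros D e He. destruct (D 1 Rlt_0_1) as [[d dpos] Hd]. simpl in Hd.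
  pose proof (Rabs_pos l) as Hl.
  exists (Rmin d (e / (Rabs l + 1))). split.
  { apply Rmin_pos; auto. apply Rdiv_lt_0_compat; lra. }
  intros y Hy. destruct (Req_dec y x) as [->|Hne].
  { rewrite Rminus_eq_0, Rabs_R0; auto. }
  set (h := y - x). assert (Hh: h <> 0) by (unfold h; lra).
  assert (Hhd: Rabs h < d) by (eapply Rlt_le_trans; [apply Hy| apply Rmin_l]).
  assert (Hhe: Rabs h < e / (Rabs l + 1)) by (eapply Rlt_le_trans; [apply Hy| apply Rmin_r]).
  specialize (Hd h Hh Hhd). replace (x + h) with y in Hd by (unfold h; ring).
  assert (Rabs (f y - f x) <= Rabs h * (Rabs l + 1)).
  { replace (f y - f x) with (h * ((f y - f x)/h - l) + h * l) by (field; auto).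
    eapply Rle_trans; [apply Rabs_triang|]. rewrite !Rabs_mult.
    pose proof (Rabs_pos h). nra. }
  apply Rmult_lt_compat_r with (r := Rabs l + 1) in Hhe; [|lra].
  unfold Rdiv in Hhe. rewrite Rmult_assoc, Rinv_l, Rmult_1_r in Hhe; lra.
Qed.

Lemma dlim_left_max f t l d : derivable_pt_lim f t l -> 0 < d ->
  (forall s, t - d < s <= t -> f s <= f t) -> 0 <= l.
Proof.
  intros D Hd Hm. destruct (Rle_lt_dec 0 l) as [|Hl]; auto. exfalso.
  destruct (D (-l/2)) as [[dl dlp] Hdl]; [lra|]. simpl in Hdl.
  set (h := - (Rmin dl d)/2).
  assert (Hmp : 0 < Rmin dl d) by (apply Rmin_pos; auto).
  assert (Hh : h < 0) by (unfold h; lra).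
  assert (Hh1 : Rabs h < dl).
  { rewrite Rabs_left by auto. unfold h. pose proof (Rmin_l dl d). lra. }
  specialize (Hdl h ltac:(lra) Hh1).
  assert (Hs : f (t + h) <= f t).
  { apply Hm. split; [|lra]. unfold h. pose proof (Rmin_r dl d). lra. }
  assert (0 <= (f (t + h) - f t) / h).
  { unfold Rdiv. pose proof (Rinv_lt_0_compat h Hh). nra. }
  apply Rabs_def2 in Hdl. lra.
Qed.

Lemma dlim_right_max f t l d : derivable_pt_lim f t l -> 0 < d ->
  (forall s, t <= s < t + d -> f s <= f t) -> l <= 0.
Proof.
  intros D Hd Hm. destruct (Rle_lt_dec l 0) as [|Hl]; auto. exfalso.
  destruct (D (l/2)) as [[dl dlp] Hdl]; [lra|]. simpl in Hdl.
  set (h := (Rmin dl d)/2).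
  assert (Hmp : 0 < Rmin dl d) by (apply Rmin_pos; auto).
  assert (Hh : 0 < h) by (unfold h; lra).
  assert (Hh1 : Rabs h < dl).
  { rewrite Rabs_right by lra. unfold h. pose proof (Rmin_l dl d). lra. }
  specialize (Hdl h ltac:(lra) Hh1).
  assert (Hs : f (t + h) <= f t).
  { apply Hm. split; [lra|]. unfold h. pose proof (Rmin_r dl d). lra. }
  assert ((f (t + h) - f t) / h <= 0).
  { unfold Rdiv. pose proof (Rinv_0_lt_compat h Hh). nra. }
  apply Rabs_def2 in Hdl. lra.
Qed.

Lemma second_test g g' c d : 0 < d ->
  (forall s, Rabs s < d -> derivable_pt_lim g s (g' s)) ->
  derivable_pt_lim g' 0 c ->
  (forall s, Rabs s < d -> g s <= g 0) -> c <= 0.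
Proof.
  intros Hd Dg Dg' Hm.
  assert (Hd0 : Rabs 0 < d) by (rewrite Rabs_R0; auto).
  assert (H0 : g' 0 = 0).
  { apply Rle_antisym.
    - apply (dlim_right_max g 0 (g' 0) d (Dg 0 Hd0) Hd).
      intros s Hs. apply Hm. rewrite Rabs_right; lra.
    - apply (dlim_left_max g 0 (g' 0) d (Dg 0 Hd0) Hd).
      intros s Hs. apply Hm. destruct (Req_dec s 0) as [->|]; [rewrite Rabs_R0; lra|].
      rewrite Rabs_left; lra. }
  destruct (Rle_lt_dec c 0) as [|Hc]; auto. exfalso.
  destruct (Dg' (c/2)) as [[dl dlp] Hdl]; [lra|]. simpl in Hdl.
  assert (Hpos : forall h, 0 < h < dl -> 0 < g' h).
  { intros h Hh. specialize (Hdl h ltac:(lra) ltac:(rewrite Rabs_right; lra)).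
    rewrite Rplus_0_l, H0, Rminus_0_r in Hdl. apply Rabs_def2 in Hdl.
    destruct (Rle_lt_dec (g' h) 0) as [Hn|]; auto.
    assert (g' h / h <= 0). { unfold Rdiv. pose proof (Rinv_0_lt_compat h ltac:(lra)). nra. }
    lra. }
  set (h0 := Rmin dl d / 2).
  assert (Hmp : 0 < Rmin dl d) by (apply Rmin_pos; auto).
  pose proof (Rmin_l dl d). pose proof (Rmin_r dl d).
  destruct (MVT_cor2 g g' 0 h0) as [xi [Hxi1 Hxi2]].
  { unfold h0; lra. }
  { intros c0 Hc0. apply Dg. rewrite Rabs_right by lra. unfold h0 in *; lra. }
  assert (g h0 <= g 0). { apply Hm. rewrite Rabs_right; unfold h0; lra. }
  assert (0 < g' xi) by (apply Hpos; unfold h0 in *; lra).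
  assert (0 < g' xi * (h0 - 0)) by (apply Rmult_lt_0_compat; unfold h0 in *; lra).
  lra.
Qed.

Definition contpt (F : pt -> R) (y : pt) : Prop :=
  forall e, 0 < e -> exists d, 0 < d /\ forall z, ball_sq y z d -> Rabs (F z - F y) < e.

Lemma MVT_any f f' a b : (forall c, Rmin a b <= c <= Rmax a b -> derivable_pt_lim f c (f' c)) ->
  exists c, Rabs (c - a) <= Rabs (b - a) /\ f b - f a = f' c * (b - a).
Proof.
  intros D. destruct (Rtotal_order a b) as [Hab|[Hab|Hab]].
  - destruct (MVT_cor2 f f' a b Hab) as [c [Hc1 Hc2]].
    { intros c Hc. apply D. rewrite Rmin_left, Rmax_right; lra. }
    exists c. split; auto. rewrite !Rabs_right; lra.
  - subst. exists b. split. rewrite Rminus_diag, Rabs_R0; lra. ring.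
  - destruct (MVT_cor2 f f' b a Hab) as [c [Hc1 Hc2]].
    { intros c Hc. apply D. rewrite Rmin_right, Rmax_left; lra. }
    exists c. split. rewrite !Rabs_left; lra. lra.
Qed.

Lemma chain_line F F1 F2 y w1 w2 rho : 0 < rho ->
  (forall z, ball_sq y z rho -> d1_is F z (F1 z) /\ d2_is F z (F2 z)) ->
  contpt F1 y -> contpt F2 y ->
  derivable_pt_lim (fun s => F (fst y + s * w1, snd y + s * w2)) 0 (w1 * F1 y + w2 * F2 y).
Proof.
  intros Hr Hd C1 C2 eps He.
  set (W := Rabs w1 + Rabs w2 + 1).
  assert (HW : 0 < W) by (unfold W; pose proof (Rabs_pos w1); pose proof (Rabs_pos w2); lra).
  destruct (C1 (eps / W)) as [d1 [Hd1 C1']]. apply Rdiv_lt_0_compat; auto.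
  destruct (C2 (eps / W)) as [d2 [Hd2 C2']]. apply Rdiv_lt_0_compat; auto.
  set (d0 := Rmin rho (Rmin d1 d2)).
  assert (Hd0 : 0 < d0) by (unfold d0; repeat apply Rmin_pos; auto).
  assert (d0r : d0 <= rho) by apply Rmin_l.
  assert (d01 : d0 <= d1) by (unfold d0; eapply Rle_trans; [apply Rmin_r|apply Rmin_l]).
  assert (d02 : d0 <= d2) by (unfold d0; eapply Rle_trans; [apply Rmin_r|apply Rmin_r]).
  assert (Hdel : 0 < d0 / W) by (apply Rdiv_lt_0_compat; auto).
  exists (mkposreal _ Hdel). simpl. intros h Hh0 Hh.
  destruct y as [a1 a2]. simpl in *.
  set (k1 := h * w1). set (k2 := h * w2).
  assert (Hk : forall w, Rabs w < W -> Rabs (h * w) < d0).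
  { intros w Hw. rewrite Rabs_mult.
    apply Rmult_lt_compat_r with (r := W) in Hh; auto.
    unfold Rdiv in Hh. rewrite Rmult_assoc, Rinv_l, Rmult_1_r in Hh by lra.
    pose proof (Rabs_pos h). pose proof (Rabs_pos w). nra. }
  assert (Hk1 : Rabs k1 < d0) by (apply Hk; unfold W; pose proof (Rabs_pos w2); lra).
  assert (Hk2 : Rabs k2 < d0) by (apply Hk; unfold W; pose proof (Rabs_pos w1); lra).
  destruct (MVT_any (fun s => F (s, a2 + k2)) (fun s => F1 (s, a2 + k2)) a1 (a1 + k1)) as [xi [Hxi Exi]].
  { intros c Hc. assert (Hb : ball_sq (a1, a2) (c, a2 + k2) rho).
    { unfold ball_sq; simpl. replace (a2 + k2 - a2) with k2 by ring. split; [|lra].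
      assert (Rabs (c - a1) <= Rabs k1).
      { unfold Rmin, Rmax in Hc. destruct (Rle_dec a1 (a1 + k1)).
        - rewrite !Rabs_right; lra.
        - rewrite (Rabs_left k1) by lra. apply Rabs_le; lra. }
      lra. }
    apply (proj1 (Hd _ Hb)). }
  destruct (MVT_any (fun s => F (a1, s)) (fun s => F2 (a1, s)) a2 (a2 + k2)) as [ze [Hze Eze]].
  { intros c Hc. assert (Hb : ball_sq (a1, a2) (a1, c) rho).
    { unfold ball_sq; simpl. rewrite Rminus_diag, Rabs_R0. split; [lra|].
      assert (Rabs (c - a2) <= Rabs k2).
      { unfold Rmin, Rmax in Hc. destruct (Rle_dec a2 (a2 + k2)).
        - rewrite !Rabs_right; lra.
        - rewrite (Rabs_left k2) by lra. apply Rabs_le; lra. }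
      lra. }
    apply (proj2 (Hd _ Hb)). }
  simpl in Exi, Eze.
  replace (a1 + (0 + h) * w1) with (a1 + k1) by (unfold k1; ring).
  replace (a2 + (0 + h) * w2) with (a2 + k2) by (unfold k2; ring).
  replace (a1 + 0 * w1) with a1 by ring. replace (a2 + 0 * w2) with a2 by ring.
  replace ((F (a1 + k1, a2 + k2) - F (a1, a2)) / h - (w1 * F1 (a1, a2) + w2 * F2 (a1, a2)))
    with (w1 * (F1 (xi, a2 + k2) - F1 (a1, a2)) + w2 * (F2 (a1, ze) - F2 (a1, a2))).
  2:{ replace (F (a1 + k1, a2 + k2) - F (a1, a2)) with
        ((F (a1 + k1, a2 + k2) - F (a1, a2 + k2)) + (F (a1, a2 + k2) - F (a1, a2))) by ring.
      rewrite Exi, Eze. unfold k1, k2. field. auto. }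
  assert (E1 : Rabs (F1 (xi, a2 + k2) - F1 (a1, a2)) < eps / W).
  { apply C1'. unfold ball_sq; simpl. replace (a2 + k2 - a2) with k2 by ring.
    replace (a1 + k1 - a1) with k1 in Hxi by ring. lra. }
  assert (E2 : Rabs (F2 (a1, ze) - F2 (a1, a2)) < eps / W).
  { apply C2'. unfold ball_sq; simpl. rewrite Rminus_diag, Rabs_R0.
    replace (a2 + k2 - a2) with k2 in Hze by ring. lra. }
  eapply Rle_lt_trans; [apply Rabs_triang|]. rewrite !Rabs_mult.
  assert (HeW : eps / W * W = eps) by (field; lra).
  pose proof (Rabs_pos w1). pose proof (Rabs_pos w2).
  pose proof (Rabs_pos (F1 (xi, a2 + k2) - F1 (a1, a2))).
  pose proof (Rabs_pos (F2 (a1, ze) - F2 (a1, a2))).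
  assert (Rabs w1 * Rabs (F1 (xi, a2 + k2) - F1 (a1, a2)) <= Rabs w1 * (eps / W)) by nra.
  assert (Rabs w2 * Rabs (F2 (a1, ze) - F2 (a1, a2)) <= Rabs w2 * (eps / W)) by nra.
  assert (0 < eps / W) by (apply Rdiv_lt_0_compat; auto).
  assert (HWd : W = Rabs w1 + Rabs w2 + 1) by reflexivity.
  clearbody W. set (e0 := eps / W) in *. clearbody e0. subst W.
  lra.
Qed.

Definition C2near (F F1 F2 F11 F12 F22 : pt -> R) (x : pt) (r : R) : Prop :=
  forall y, ball_sq x y r ->
  d1_is F y (F1 y) /\ d2_is F y (F2 y) /\ d1_is F1 y (F11 y) /\ d2_is F1 y (F12 y) /\
  d1_is F2 y (F12 y) /\ d2_is F2 y (F22 y) /\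
  contpt F1 y /\ contpt F2 y /\ contpt F11 y /\ contpt F12 y /\ contpt F22 y.

Lemma dlim_shift f s l : derivable_pt_lim (fun h => f (s + h)) 0 l -> derivable_pt_lim f s l.
Proof.
  intros D eps He. destruct (D eps He) as [d Hd]. exists d. intros h H1 H2.
  specialize (Hd h H1 H2). rewrite Rplus_0_l, Rplus_0_r in Hd. auto.
Qed.

Lemma ball_sq_trans x y z r1 r2 : ball_sq x y r1 -> ball_sq y z r2 -> ball_sq x z (r1 + r2).
Proof.
  unfold ball_sq. intros [A B] [C D].
  split.
  - replace (fst z - fst x) with ((fst z - fst y) + (fst y - fst x)) by ring.
    eapply Rle_lt_trans; [apply Rabs_triang|]. lra.
  - replace (snd z - snd x) with ((snd z - snd y) + (snd y - snd x)) by ring.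
    eapply Rle_lt_trans; [apply Rabs_triang|]. lra.
Qed.

Lemma line2 F F1 F2 F11 F12 F22 x r v1 v2 : 0 < r -> C2near F F1 F2 F11 F12 F22 x r ->
  exists d, 0 < d /\
  (forall s, Rabs s < d -> derivable_pt_lim (fun s => F (fst x + s * v1, snd x + s * v2)) s
       (v1 * F1 (fst x + s * v1, snd x + s * v2) + v2 * F2 (fst x + s * v1, snd x + s * v2))) /\
  derivable_pt_lim (fun s => v1 * F1 (fst x + s * v1, snd x + s * v2) + v2 * F2 (fst x + s * v1, snd x + s * v2)) 0
     (v1 * (v1 * F11 x + v2 * F12 x) + v2 * (v1 * F12 x + v2 * F22 x)).
Proof.
  intros Hr HC.
  set (W := Rabs v1 + Rabs v2 + 1).
  assert (HW : 0 < W) by (unfold W; pose proof (Rabs_pos v1); pose proof (Rabs_pos v2); lra).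
  exists (r / 2 / W). split. { apply Rdiv_lt_0_compat; lra. }
  split.
  - intros s Hs. set (y := (fst x + s * v1, snd x + s * v2)).
    assert (Hy : ball_sq x y (r/2)).
    { assert (Hk : forall w, Rabs w < W -> Rabs (s * w) < r/2).
      { intros w Hw. rewrite Rabs_mult.
        apply Rmult_lt_compat_r with (r := W) in Hs; auto.
        unfold Rdiv in Hs. rewrite Rmult_assoc, Rinv_l, Rmult_1_r in Hs by lra.
        pose proof (Rabs_pos s). pose proof (Rabs_pos w). nra. }
      unfold ball_sq, y; simpl. replace (fst x + s * v1 - fst x) with (s * v1) by ring.
      replace (snd x + s * v2 - snd x) with (s * v2) by ring.
      split; apply Hk; unfold W; pose proof (Rabs_pos v1); pose proof (Rabs_pos v2); lra. }
    apply dlim_shift.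
    assert (Hyx : forall z, ball_sq y z (r/2) -> ball_sq x z r).
    { intros z Hz. replace r with (r/2 + r/2) by field. eapply ball_sq_trans; eauto. }
    assert (Hyy : ball_sq x y r) by (apply Hyx; unfold ball_sq; rewrite !Rminus_diag, Rabs_R0; lra).
    destruct (HC y Hyy) as (_&_&_&_&_&_&C1&C2&_).
    pose proof (chain_line F F1 F2 y v1 v2 (r/2) ltac:(lra)
      (fun z Hz => let H := HC z (Hyx z Hz) in conj (proj1 H) (proj1 (proj2 H))) C1 C2) as D.
    eapply dlim_ext; [|exact D]. intros h. simpl. f_equal. f_equal; ring.
  - destruct x as [a1 a2]. simpl.
    assert (Hxx : ball_sq (a1, a2) (a1, a2) r) by (unfold ball_sq; rewrite !Rminus_diag, Rabs_R0; lra).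
    destruct (HC _ Hxx) as (_&_&_&_&_&_&_&_&C11&C12&C22).
    pose proof (chain_line F1 F11 F12 (a1, a2) v1 v2 r Hr
      (fun z Hz => let H := HC z Hz in conj (proj1 (proj2 (proj2 H))) (proj1 (proj2 (proj2 (proj2 H))))) C11 C12) as D1.
    pose proof (chain_line F2 F12 F22 (a1, a2) v1 v2 r Hr
      (fun z Hz => let H := HC z Hz in conj (proj1 (proj2 (proj2 (proj2 (proj2 H))))) (proj1 (proj2 (proj2 (proj2 (proj2 (proj2 H))))))) C12 C22) as D2.
    simpl in D1, D2.
    pose proof (derivable_pt_lim_plus _ _ _ _ _ (derivable_pt_lim_scal _ v1 _ _ D1) (derivable_pt_lim_scal _ v2 _ _ D2)) as D.
    eapply dlim_ext; [|exact D]. intros h. unfold plus_fct, mult_real_fct. reflexivity.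
Qed.

Lemma BW_R (u : nat -> R) (M : R) : (forall n, Rabs (u n) <= M) ->
  exists f : nat -> nat, (forall n, (f n < f (S n))%nat) /\
  exists l, forall eps, 0 < eps -> exists N, forall n, (N <= n)%nat ->
     Rabs (u (f n) - l) < eps.
Proof. exact (BWM.BW_R u M). Qed.

Definition incr (f : nat -> nat) := forall n, (f n < f (S n))%nat.
Definition cvs (u : nat -> R) (l : R) := forall eps, 0 < eps -> exists N, forall n, (N <= n)%nat -> Rabs (u n - l) < eps.

Lemma incr_ge f : incr f -> forall n, (n <= f n)%nat.
Proof. intros H n. induction n. lia. specialize (H n). lia. Qed.

Lemma incr_mono f : incr f -> forall n m, (n <= m)%nat -> (f n <= f m)%nat.
Proof. intros H n m Hnm. induction Hnm. lia. specialize (H m). lia. Qed.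

Lemma incr_comp f g : incr f -> incr g -> incr (fun n => f (g n)).
Proof.
  intros Hf Hg n. assert (S (g n) <= g (S n))%nat by (apply Hg).
  pose proof (incr_mono f Hf _ _ H). specialize (Hf (g n)). lia.
Qed.

Lemma cvs_sub u l f : cvs u l -> incr f -> cvs (fun n => u (f n)) l.
Proof.
  intros H Hf eps He. destruct (H eps He) as [N HN]. exists N. intros n Hn.
  apply HN. pose proof (incr_ge f Hf n). lia.
Qed.

Lemma SC3 (M : R) (p : nat -> pt) (s : nat -> R) :
  (forall n, Rabs (fst (p n)) <= M /\ Rabs (snd (p n)) <= M /\ Rabs (s n) <= M) ->
  exists f, incr f /\ exists x t,
    cvs (fun n => fst (p (f n))) (fst x) /\ cvs (fun n => snd (p (f n))) (snd x) /\
    cvs (fun n => s (f n)) t.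
Proof.
  intros HM.
  destruct (BW_R (fun n => fst (p n)) M) as [f1 [Hf1 [l1 Hl1]]]. { intros n; apply HM. }
  destruct (BW_R (fun n => snd (p (f1 n))) M) as [f2 [Hf2 [l2 Hl2]]]. { intros n; apply HM. }
  destruct (BW_R (fun n => s (f1 (f2 n))) M) as [f3 [Hf3 [l3 Hl3]]]. { intros n; apply HM. }
  exists (fun n => f1 (f2 (f3 n))). split.
  { apply incr_comp; auto. apply incr_comp; auto. }
  exists (l1, l2), l3. simpl. split; [|split].
  - apply (cvs_sub (fun n => fst (p (f1 n))) l1 (fun n => f2 (f3 n))); auto.
    apply incr_comp; auto.
  - apply (cvs_sub (fun n => snd (p (f1 (f2 n)))) l2 f3); auto.
  - exact Hl3.
Qed.

Definition cl_seq_closed (K : pt -> Prop) := forall (p : nat -> pt) x, (forall n, K (p n)) ->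
  cvs (fun n => fst (p n)) (fst x) -> cvs (fun n => snd (p n)) (snd x) -> K x.

Lemma closure_closed Om : cl_seq_closed (closure2 Om).
Proof.
  intros p x Hp H1 H2 e He.
  destruct (H1 (e/2)) as [N1 HN1]; [lra|]. destruct (H2 (e/2)) as [N2 HN2]; [lra|].
  destruct (Hp (max N1 N2) (e/2)) as [y [Hy [B1 B2]]]; [lra|].
  exists y. split; auto.
  specialize (HN1 (max N1 N2) (Nat.le_max_l _ _)). specialize (HN2 (max N1 N2) (Nat.le_max_r _ _)).
  unfold ball_sq. split.
  - replace (fst y - fst x) with ((fst y - fst (p (max N1 N2))) + (fst (p (max N1 N2)) - fst x)) by ring.
    eapply Rle_lt_trans; [apply Rabs_triang|]. lra.
  - replace (snd y - snd x) with ((snd y - snd (p (max N1 N2))) + (snd (p (max N1 N2)) - snd x)) by ring.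
    eapply Rle_lt_trans; [apply Rabs_triang|]. lra.
Qed.

Lemma cvs_le u l c : cvs u l -> (forall n, u n <= c) -> l <= c.
Proof.
  intros H Hc. destruct (Rle_lt_dec l c); auto. exfalso.
  destruct (H (l - c)) as [N HN]; [lra|]. specialize (HN N (le_n _)). specialize (Hc N).
  apply Rabs_def2 in HN. lra.
Qed.
Lemma cvs_ge u l c : cvs u l -> (forall n, c <= u n) -> c <= l.
Proof.
  intros H Hc. destruct (Rle_lt_dec c l); auto. exfalso.
  destruct (H (c - l)) as [N HN]; [lra|]. specialize (HN N (le_n _)). specialize (Hc N).
  apply Rabs_def2 in HN. lra.
Qed.

Section EVT.
Variable K : pt -> Prop.
Variable M : R.
Hypothesis HKb : forall x, K x -> Rabs (fst x) <= M /\ Rabs (snd x) <= M.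
Hypothesis HKc : cl_seq_closed K.
Variables a b : R.
Hypothesis Hab : a <= b.
Variable f : pt -> R -> R.
Hypothesis Hf : cont_on3 (fun x t => K x /\ a <= t <= b) f.

Lemma seq_lim (p : nat -> pt) (s : nat -> R) : (forall n, K (p n) /\ a <= s n <= b) ->
  exists g, incr g /\ exists x t, K x /\ a <= t <= b /\
    forall d, 0 < d -> exists N, forall n, (N <= n)%nat ->
      ball_sq x (p (g n)) d /\ Rabs (s (g n) - t) < d.
Proof.
  intros Hp.
  set (M' := Rmax M (Rmax (Rabs a) (Rabs b))).
  destruct (SC3 M' p s) as [g [Hg [x [t [C1 [C2 C3]]]]]].
  { intros n. destruct (Hp n) as [HK Hs]. destruct (HKb _ HK).
    unfold M'. repeat split.
    - eapply Rle_trans; [eauto|apply Rmax_l].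
    - eapply Rle_trans; [eauto|apply Rmax_l].
    - apply Rabs_le. pose proof (Rmax_r M (Rmax (Rabs a) (Rabs b))).
      pose proof (Rmax_l (Rabs a) (Rabs b)). pose proof (Rmax_r (Rabs a) (Rabs b)).
      pose proof (Rle_abs a). pose proof (Rle_abs (-b)). rewrite Rabs_Ropp in *. 
      pose proof (Rle_abs b). pose proof (Rle_abs (-a)). rewrite Rabs_Ropp in *. lra. }
  exists g. split; auto. exists x, t. split; [|split].
  - apply (HKc (fun n => p (g n)) x); auto. intros n; apply Hp.
  - split. apply (cvs_ge (fun n => s (g n))); auto. intros n; apply Hp.
    apply (cvs_le (fun n => s (g n))); auto. intros n; apply Hp.
  - intros d Hd. destruct (C1 d Hd) as [N1 H1]. destruct (C2 d Hd) as [N2 H2].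
    destruct (C3 d Hd) as [N3 H3]. exists (max N1 (max N2 N3)). intros n Hn.
    unfold ball_sq. split; [split|].
    + apply H1. lia.
    + apply H2. lia.
    + apply H3. lia.
Qed.

Lemma EVT_bounded : exists B, forall y s, K y -> a <= s <= b -> f y s <= B.
Proof.
  apply NNPP. intros Hn.
  assert (H : forall n : nat, exists ps : pt * R, K (fst ps) /\ a <= snd ps <= b /\ INR n < f (fst ps) (snd ps)).
  { intros n. apply NNPP. intros Hn2. apply Hn. exists (INR n). intros y s Hy Hs.
    destruct (Rle_lt_dec (f y s) (INR n)); auto. exfalso. apply Hn2. exists (y, s). simpl. auto. }
  set (ps := fun n => proj1_sig (constructive_indefinite_description _ (H n))).
  assert (Hps : forall n, K (fst (ps n)) /\ a <= snd (ps n) <= b /\ INR n < f (fst (ps n)) (snd (ps n))).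
  { intros n. unfold ps. destruct (constructive_indefinite_description _ (H n)). simpl. auto. }
  destruct (seq_lim (fun n => fst (ps n)) (fun n => snd (ps n))) as [g [Hg [x [t [Hx [Ht Hc]]]]]].
  { intros n. split; apply Hps. }
  destruct (Hf x t (conj Hx Ht) 1 Rlt_0_1) as [d [Hd Hfd]].
  destruct (Hc d Hd) as [N HN].
  destruct (INR_unbounded (f x t + 1)) as [m Hm].
  set (n := max N m). destruct (HN n (Nat.le_max_l _ _)) as [B1 B2].
  assert (Hp := Hps (g n)). destruct Hp as (HK&Hs&Hlt).
  specialize (Hfd _ _ (conj HK Hs) B1 B2).
  assert (INR m <= INR (g n)). { apply le_INR. pose proof (incr_ge g Hg n). unfold n in *. lia. }
  apply Rabs_def2 in Hfd. lra.
Qed.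

Lemma EVT_max : (exists x, K x) -> exists x t, K x /\ a <= t <= b /\
   forall y s, K y -> a <= s <= b -> f y s <= f x t.
Proof.
  intros [x0 Hx0].
  destruct EVT_bounded as [B HB].
  set (E := fun z => exists y s, K y /\ a <= s <= b /\ z = f y s).
  destruct (completeness E) as [m [Hub Hlub]].
  { exists B. intros z [y [s [Hy [Hs ->]]]]. apply HB; auto. }
  { exists (f x0 a). exists x0, a. repeat split; auto; lra. }
  assert (H : forall n : nat, exists ps : pt * R, K (fst ps) /\ a <= snd ps <= b /\
      m - / (INR n + 1) < f (fst ps) (snd ps)).
  { intros n. apply NNPP. intros Hn.
    assert (Hpos : 0 < / (INR n + 1)) by (apply Rinv_0_lt_compat; pose proof (pos_INR n); lra).
    assert (m <= m - / (INR n + 1)); [|lra].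
    apply Hlub. intros z [y [s [Hy [Hs ->]]]].
    destruct (Rle_lt_dec (f y s) (m - / (INR n + 1))); auto. exfalso. apply Hn.
    exists (y, s). simpl. auto. }
  set (ps := fun n => proj1_sig (constructive_indefinite_description _ (H n))).
  assert (Hps : forall n, K (fst (ps n)) /\ a <= snd (ps n) <= b /\
      m - / (INR n + 1) < f (fst (ps n)) (snd (ps n))).
  { intros n. unfold ps. destruct (constructive_indefinite_description _ (H n)). simpl. auto. }
  destruct (seq_lim (fun n => fst (ps n)) (fun n => snd (ps n))) as [g [Hg [x [t [Hx [Ht Hc]]]]]].
  { intros n. split; apply Hps. }
  exists x, t. split; auto. split; auto.
  assert (Hm : m <= f x t).
  { destruct (Rle_lt_dec m (f x t)) as [|Hlt]; auto. exfalso.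
    set (eps := (m - f x t)/2).
    assert (Heps : 0 < eps) by (unfold eps; lra).
    destruct (Hf x t (conj Hx Ht) eps Heps) as [d [Hd Hfd]].
    destruct (Hc d Hd) as [N HN].
    destruct (archimed_cor1 eps Heps) as [m1 [Hm1 Hm1p]].
    set (n := max N m1). destruct (HN n (Nat.le_max_l _ _)) as [B1 B2].
    destruct (Hps (g n)) as (HK&Hs&Hlt2).
    specialize (Hfd _ _ (conj HK Hs) B1 B2).
    assert (INR m1 <= INR (g n)). { apply le_INR. pose proof (incr_ge g Hg n). unfold n in *. lia. }
    assert (/ (INR (g n) + 1) <= / INR m1).
    { apply Rinv_le_contravar. apply lt_0_INR; lia. lra. }
    apply Rabs_def2 in Hfd. unfold eps in *. lra. }
  intros y s Hy Hs. assert (f y s <= m) by (apply Hub; exists y, s; auto). lra.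
Qed.
End EVT.

Section C3.
Variable P : pt -> R -> Prop.

Lemma c3_sub (P' : pt -> R -> Prop) f : (forall x t, P' x t -> P x t) -> cont_on3 P f -> cont_on3 P' f.
Proof.
  intros H C x t Hx e He. destruct (C x t (H _ _ Hx) e He) as [d [Hd Hc]].
  exists d. split; auto.
Qed.

Lemma c3_plus f g : cont_on3 P f -> cont_on3 P g -> cont_on3 P (fun x t => f x t + g x t).
Proof.
  intros Cf Cg x t Hx e He.
  destruct (Cf x t Hx (e/2)) as [d1 [Hd1 H1]]; [lra|].
  destruct (Cg x t Hx (e/2)) as [d2 [Hd2 H2]]; [lra|].
  exists (Rmin d1 d2). split. apply Rmin_pos; auto.
  intros y s Hy Hb Hs. pose proof (Rmin_l d1 d2). pose proof (Rmin_r d1 d2).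
  assert (B1 : ball_sq x y d1) by (destruct Hb; split; lra).
  assert (B2 : ball_sq x y d2) by (destruct Hb; split; lra).
  specialize (H1 y s Hy B1 ltac:(lra)). specialize (H2 y s Hy B2 ltac:(lra)).
  replace (f y s + g y s - (f x t + g x t)) with ((f y s - f x t) + (g y s - g x t)) by ring.
  eapply Rle_lt_trans; [apply Rabs_triang|]. lra.
Qed.

Lemma c3_const c : cont_on3 P (fun x t => c).
Proof. intros x t _ e He. exists 1. split. lra. intros. rewrite Rminus_diag, Rabs_R0. auto. Qed.

Lemma c3_fst : cont_on3 P (fun x t => fst x).
Proof. intros x t _ e He. exists e. split; auto. intros y s _ [A B] _. auto. Qed.
Lemma c3_snd : cont_on3 P (fun x t => snd x).
Proof. intros x t _ e He. exists e. split; auto. intros y s _ [A B] _. auto. Qed.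

Lemma c3_mult f g : cont_on3 P f -> cont_on3 P g -> cont_on3 P (fun x t => f x t * g x t).
Proof.
  intros Cf Cg x t Hx e He.
  set (G := Rabs (g x t) + 1). set (F := Rabs (f x t) + 1).
  assert (HG : 0 < G) by (unfold G; pose proof (Rabs_pos (g x t)); lra).
  assert (HF : 0 < F) by (unfold F; pose proof (Rabs_pos (f x t)); lra).
  destruct (Cf x t Hx (e/2/G)) as [d1 [Hd1 H1]]. { apply Rdiv_lt_0_compat; lra. }
  destruct (Cg x t Hx (Rmin 1 (e/2/F))) as [d2 [Hd2 H2]]. { apply Rmin_pos; [lra|]. apply Rdiv_lt_0_compat; lra. }
  exists (Rmin d1 d2). split. apply Rmin_pos; auto.
  intros y s Hy Hb Hs. pose proof (Rmin_l d1 d2). pose proof (Rmin_r d1 d2).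
  assert (B1 : ball_sq x y d1) by (destruct Hb; split; lra).
  assert (B2 : ball_sq x y d2) by (destruct Hb; split; lra).
  specialize (H1 y s Hy B1 ltac:(lra)). specialize (H2 y s Hy B2 ltac:(lra)).
  pose proof (Rmin_l 1 (e/2/F)). pose proof (Rmin_r 1 (e/2/F)).
  replace (f y s * g y s - f x t * g x t) with ((f y s - f x t) * g y s + f x t * (g y s - g x t)) by ring.
  eapply Rle_lt_trans; [apply Rabs_triang|]. rewrite !Rabs_mult.
  assert (Hgy : Rabs (g y s) <= G).
  { unfold G. replace (g y s) with (g x t + (g y s - g x t)) by ring.
    eapply Rle_trans; [apply Rabs_triang|]. lra. }
  assert (E1 : e / 2 / G * G = e/2) by (field; lra).
  assert (E2 : e / 2 / F * F = e/2) by (field; lra).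
  assert (Hfx : Rabs (f x t) <= F) by (unfold F; lra).
  pose proof (Rabs_pos (f y s - f x t)). pose proof (Rabs_pos (g y s)).
  pose proof (Rabs_pos (f x t)). pose proof (Rabs_pos (g y s - g x t)).
  assert (Rabs (f y s - f x t) * Rabs (g y s) <= e/2/G * G).
  { apply Rmult_le_compat; lra. }
  assert (Rabs (f x t) * Rabs (g y s - g x t) < F * (e/2/F)).
  { apply Rle_lt_trans with (F * Rabs (g y s - g x t)).
    apply Rmult_le_compat_r; lra. apply Rmult_lt_compat_l; lra. }
  lra.
Qed.

Lemma c3_scal c f : cont_on3 P f -> cont_on3 P (fun x t => c * f x t).
Proof. intros. apply (c3_mult (fun _ _ => c)); auto. apply c3_const. Qed.

Lemma c3_minus f g : cont_on3 P f -> cont_on3 P g -> cont_on3 P (fun x t => f x t - g x t).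
Proof.
  intros. assert (H1 := c3_plus f (fun x t => -1 * g x t) H (c3_scal (-1) g H0)).
  intros x t Hx e He. destruct (H1 x t Hx e He) as [d [Hd Hc]]. exists d. split; auto.
  intros. replace (f y s - g y s - (f x t - g x t)) with (f y s + -1 * g y s - (f x t + -1 * g x t)) by ring.
  auto.
Qed.

Lemma c3_of2 (S : pt -> Prop) g : cont_on2 S g -> (forall x t, P x t -> S x) -> cont_on3 P (fun x t => g x).
Proof.
  intros C H x t Hx e He. destruct (C x (H _ _ Hx) e He) as [d [Hd Hc]].
  exists d. split; auto. intros y s Hy Hb _. apply Hc; eauto.
Qed.

Lemma c3_oft h : (forall t e, 0 < e -> exists d, 0 < d /\ forall s, Rabs (s - t) < d -> Rabs (h s - h t) < e) ->
  cont_on3 P (fun x t => h t).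
Proof.
  intros C x t _ e He. destruct (C t e He) as [d [Hd Hc]]. exists d. split; auto.
Qed.
End C3.

Lemma dpoly a b c x : derivable_pt_lim (fun s => a * s * s + b * s + c) x (2 * a * x + b).
Proof.
  intros eps He. assert (Hp : 0 < eps / (Rabs a + 1)) by (apply Rdiv_lt_0_compat; pose proof (Rabs_pos a); lra).
  exists (mkposreal _ Hp). simpl. intros h Hh Hhd.
  replace ((a * (x + h) * (x + h) + b * (x + h) + c - (a * x * x + b * x + c)) / h - (2 * a * x + b))
    with (a * h) by (field; auto).
  rewrite Rabs_mult. pose proof (Rabs_pos a). pose proof (Rabs_pos h).
  apply Rmult_lt_compat_r with (r := Rabs a + 1) in Hhd; [|lra].
  unfold Rdiv in Hhd. rewrite Rmult_assoc, Rinv_l, Rmult_1_r in Hhd by lra. nra.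
Qed.

Lemma dlim_lin3 f g k s l m n a b c d :
  derivable_pt_lim f s l -> derivable_pt_lim g s m -> derivable_pt_lim k s n ->
  derivable_pt_lim (fun z => a * f z + b * g z + c * k z + d) s (a * l + b * m + c * n).
Proof.
  intros Df Dg Dk.
  pose proof (derivable_pt_lim_plus _ _ _ _ _
    (derivable_pt_lim_plus _ _ _ _ _
      (derivable_pt_lim_plus _ _ _ _ _ (derivable_pt_lim_scal _ a _ _ Df) (derivable_pt_lim_scal _ b _ _ Dg))
      (derivable_pt_lim_scal _ c _ _ Dk)) (derivable_pt_lim_const d s)) as D.
  rewrite Rplus_0_r in D. eapply dlim_ext; [|exact D]. intros z. reflexivity.
Qed.

Lemma lineball x v1 v2 r : 0 < r -> exists d, 0 < d /\ forall s, Rabs s < d ->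
  ball_sq x (fst x + s * v1, snd x + s * v2) r.
Proof.
  intros Hr. set (W := Rabs v1 + Rabs v2 + 1).
  assert (HW : 0 < W) by (unfold W; pose proof (Rabs_pos v1); pose proof (Rabs_pos v2); lra).
  exists (r / W). split. apply Rdiv_lt_0_compat; lra.
  intros s Hs.
  assert (Hk : forall w, Rabs w < W -> Rabs (s * w) < r).
  { intros w Hw. rewrite Rabs_mult.
    apply Rmult_lt_compat_r with (r := W) in Hs; auto.
    unfold Rdiv in Hs. rewrite Rmult_assoc, Rinv_l, Rmult_1_r in Hs by lra.
    pose proof (Rabs_pos s). pose proof (Rabs_pos w). nra. }
  unfold ball_sq; simpl. replace (fst x + s * v1 - fst x) with (s * v1) by ring.
  replace (snd x + s * v2 - snd x) with (s * v2) by ring.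
  split; apply Hk; unfold W; pose proof (Rabs_pos v1); pose proof (Rabs_pos v2); lra.
Qed.

Lemma dlim_val f x l l' : l = l' -> derivable_pt_lim f x l -> derivable_pt_lim f x l'.
Proof. intros ->; auto. Qed.

Definition q (y : pt) : R := fst y * fst y + snd y * snd y.

Lemma q_C2 x r : C2near q (fun y => 2 * fst y) (fun y => 2 * snd y) (fun _ => 2) (fun _ => 0) (fun _ => 2) x r.
Proof.
  intros y _. unfold d1_is, d2_is, q. simpl.
  assert (Hc : forall c, contpt (fun _ => c) y).
  { intros c e He. exists 1. split. lra. intros. rewrite Rminus_diag, Rabs_R0. auto. }
  split; [|split;[|split;[|split;[|split;[|split;[|split;[|split;[|split;[|split]]]]]]]]].
  - apply (dlim_val _ _ (2 * 1 * fst y + 0)); [ring|].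
    eapply dlim_ext; [|apply (dpoly 1 0 (snd y * snd y))]. intros; simpl; ring.
  - apply (dlim_val _ _ (2 * 1 * snd y + 0)); [ring|].
    eapply dlim_ext; [|apply (dpoly 1 0 (fst y * fst y))]. intros; simpl; ring.
  - apply (dlim_val _ _ (2 * 0 * fst y + 2)); [ring|].
    eapply dlim_ext; [|apply (dpoly 0 2 0)]. intros; simpl; ring.
  - apply (dlim_val _ _ (2 * 0 * snd y + 0)); [ring|].
    eapply dlim_ext; [|apply (dpoly 0 0 (2 * fst y))]. intros; simpl; ring.
  - apply (dlim_val _ _ (2 * 0 * fst y + 0)); [ring|].
    eapply dlim_ext; [|apply (dpoly 0 0 (2 * snd y))]. intros; simpl; ring.
  - apply (dlim_val _ _ (2 * 0 * snd y + 2)); [ring|].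
    eapply dlim_ext; [|apply (dpoly 0 2 0)]. intros; simpl; ring.
  - intros e He. exists (e/2). split. lra. intros z [A B].
    replace (2 * fst z - 2 * fst y) with (2 * (fst z - fst y)) by ring. rewrite Rabs_mult, Rabs_right by lra. lra.
  - intros e He. exists (e/2). split. lra. intros z [A B].
    replace (2 * snd z - 2 * snd y) with (2 * (snd z - snd y)) by ring. rewrite Rabs_mult, Rabs_right by lra. lra.
  - apply Hc. - apply Hc. - apply Hc.
Qed.

Definition psd (p qq r : R) := forall v1 v2, 0 <= p*v1*v1 + 2*qq*v1*v2 + r*v2*v2.

Lemma psd_facts p qq r : psd p qq r -> 0 <= p /\ 0 <= r /\ qq*qq <= p*r.
Proof.
  intros H. pose proof (H 1 0). pose proof (H 0 1). pose proof (H qq (-p)).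
  pose proof (H (-(r+1)) qq).
  assert (0 <= p) by nra. assert (0 <= r) by nra. repeat split; auto.
  destruct (Req_dec p 0) as [->|Hp]; nra.
Qed.

Lemma alg_up a b cc p qq r : 0 < a + cc -> 0 < a*cc - b*b -> psd p qq r ->
  a*cc - b*b <= (a+p)*(cc+r) - (b+qq)*(b+qq).
Proof.
  intros H1 H2 H. destruct (psd_facts _ _ _ H) as (Hp&Hr&Hq).
  assert (Ha : 0 < a) by nra.
  pose proof (H (-b) a).
  assert (Hc : 0 <= a*r + cc*p - 2*b*qq).
  { assert (a * (a*r + cc*p - 2*b*qq) = (p*(-b)*(-b) + 2*qq*(-b)*a + r*a*a) + (a*cc - b*b)*p) by ring.
    nra. }
  nra.
Qed.

Lemma alg_low a b cc p qq r : 0 < a + cc -> 0 < a*cc - b*b -> psd p qq r ->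
  (a*cc - b*b) * (p + r) <= (a + cc) * (a*r + cc*p - 2*b*qq).
Proof.
  intros H1 H2 H. pose proof (H b (-a)). pose proof (H cc (-b)). nra.
Qed.

Lemma pd_facts a b c : pos_def2 a b c -> 0 < a /\ 0 < c /\ 0 < a*c - b*b.
Proof.
  intros H. assert (Ha : 0 < a) by (pose proof (H 1 0 ltac:(left; lra)); nra).
  assert (Hc : 0 < c) by (pose proof (H 0 1 ltac:(right; lra)); nra).
  repeat split; auto. pose proof (H b (-a) ltac:(right; lra)). nra.
Qed.

Section Main.
Variable Omega : pt -> Prop.
Hypothesis HOm : bounded_domain Omega.
Variables u ut u1 u2 u11 u12 u22 : pt -> R -> R.
Hypothesis Hu : C21_closure Omega u ut u1 u2 u11 u12 u22.
Hypothesis HE2 : forall x t, closure2 Omega x -> 0 <= t ->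
     0 < - ut x t * (u11 x t + u22 x t) + (u11 x t * u22 x t - u12 x t ^ 2).
Variables U U1 U2 U11 U12 U22 : pt -> R.
Hypothesis HU : C2_closure Omega U U1 U2 U11 U12 U22.
Hypothesis Hconv : forall x, closure2 Omega x -> pos_def2 (U11 x) (U12 x) (U22 x).
Variable x0 : pt.
Hypothesis Hx0 : Omega x0.
Hypothesis Hlap : 0 < u11 x0 0 + u22 x0 0.
Hypothesis Hbdy : forall e, 0 < e -> exists T, forall t, T <= t ->
     forall x, boundary2 Omega x -> Rabs (u x t - U x) <= e.
Hypothesis HEc : forall e, 0 < e -> exists T, forall t, T <= t ->
     forall x, closure2 Omega x ->
       Rabs ((- ut x t * (u11 x t + u22 x t) + (u11 x t * u22 x t - u12 x t ^ 2))
             - (U11 x * U22 x - U12 x ^ 2)) <= e.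

Definition DD := fun x t => closure2 Omega x /\ 0 <= t.

Lemma Om_open : open2 Omega.
Proof. apply HOm. Qed.

Lemma K_of_Om x : Omega x -> closure2 Omega x.
Proof. intros H e He. exists x. split; auto. unfold ball_sq. rewrite !Rminus_diag, Rabs_R0. lra. Qed.

Lemma K_Om x : closure2 Omega x -> ~ boundary2 Omega x -> Omega x.
Proof. intros H1 H2. apply NNPP. intros H3. apply H2. split; auto. Qed.

Lemma K_bound : exists M, 0 <= M /\ forall x, closure2 Omega x -> Rabs (fst x) <= M /\ Rabs (snd x) <= M.
Proof.
  destruct HOm as (_&_&_&[M HM]). exists (Rabs M + 1). split. pose proof (Rabs_pos M); lra.
  intros x Hx. destruct (Hx 1 Rlt_0_1) as [y [Hy [B1 B2]]]. destruct (HM y Hy) as [C1 C2].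
  pose proof (Rle_abs M).
  split.
  - replace (fst x) with (fst y - (fst y - fst x)) by ring.
    eapply Rle_trans; [apply Rabs_triang|]. rewrite Rabs_Ropp. lra.
  - replace (snd x) with (snd y - (snd y - snd x)) by ring.
    eapply Rle_trans; [apply Rabs_triang|]. rewrite Rabs_Ropp. lra.
Qed.

Lemma Hu_d x t : Omega x -> 0 < t ->
     derivable_pt_lim (fun s => u x s) t (ut x t) /\
     d1_is (fun y => u y t) x (u1 x t) /\ d2_is (fun y => u y t) x (u2 x t) /\
     d1_is (fun y => u1 y t) x (u11 x t) /\ d2_is (fun y => u1 y t) x (u12 x t) /\
     d1_is (fun y => u2 y t) x (u12 x t) /\ d2_is (fun y => u2 y t) x (u22 x t).
Proof. apply Hu. Qed.

Lemma Hu_c : cont_on3 DD u /\ cont_on3 DD ut /\ cont_on3 DD u1 /\ cont_on3 DD u2 /\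
   cont_on3 DD u11 /\ cont_on3 DD u12 /\ cont_on3 DD u22.
Proof. destruct Hu as [_ H]. exact H. Qed.

Lemma contpt3 F y t : cont_on3 DD F -> Omega y -> 0 <= t -> contpt (fun z => F z t) y.
Proof.
  intros C Hy Ht e He. destruct (Om_open y Hy) as [r [Hr Hro]].
  destruct (C y t (conj (K_of_Om y Hy) Ht) e He) as [d [Hd Hc]].
  exists (Rmin r d). split. apply Rmin_pos; auto.
  intros z [B1 B2]. pose proof (Rmin_l r d). pose proof (Rmin_r r d).
  apply Hc. split; [apply K_of_Om, Hro; split|]; lra.
  split; lra. rewrite Rminus_diag, Rabs_R0. lra.
Qed.

Lemma contpt2 G y : cont_on2 (closure2 Omega) G -> Omega y -> contpt G y.
Proof.
  intros C Hy e He. destruct (Om_open y Hy) as [r [Hr Hro]].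
  destruct (C y (K_of_Om y Hy) e He) as [d [Hd Hc]].
  exists (Rmin r d). split. apply Rmin_pos; auto.
  intros z [B1 B2]. pose proof (Rmin_l r d). pose proof (Rmin_r r d).
  apply Hc. apply K_of_Om, Hro; split; lra. split; lra.
Qed.

Definition Lap x t := u11 x t + u22 x t.

Lemma Lap_ne x t : closure2 Omega x -> 0 <= t -> Lap x t <> 0.
Proof.
  intros Hx Ht H0. specialize (HE2 x t Hx Ht). unfold Lap in H0.
  rewrite H0 in HE2. assert (u22 x t = - u11 x t) by lra. rewrite H in HE2. nra.
Qed.

Lemma Lap_cont : cont_on3 DD Lap.
Proof. destruct Hu_c as (_&_&_&_&C11&_&C22). unfold Lap. apply c3_plus; auto. Qed.

Lemma pos_near F x t : cont_on3 DD F -> DD x t -> 0 < F x t ->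
  exists d, 0 < d /\ forall z, DD z t -> ball_sq x z d -> 0 < F z t.
Proof.
  intros C Hx Hp. destruct (C x t Hx (F x t) Hp) as [d [Hd Hc]]. exists d. split; auto.
  intros z Hz Hb. specialize (Hc z t Hz Hb ltac:(rewrite Rminus_diag, Rabs_R0; lra)).
  apply Rabs_def2 in Hc. lra.
Qed.

Lemma clamp_lip a s s' : 0 <= a -> Rabs (Rmax 0 (Rmin s' a) - Rmax 0 (Rmin s a)) <= Rabs (s' - s).
Proof.
  intros Ha. destruct (Rcase_abs (s' - s)) as [Hn|Hp].
  - rewrite (Rabs_left (s' - s)) by auto. apply Rabs_le.
    unfold Rmax, Rmin; repeat destruct Rle_dec; lra.
  - rewrite (Rabs_right (s' - s)) by auto. apply Rabs_le.
    unfold Rmax, Rmin; repeat destruct Rle_dec; lra.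
Qed.

Lemma Lap_x0 t : 0 <= t -> 0 < Lap x0 t.
Proof.
  intros Ht. destruct (Rlt_le_dec 0 (Lap x0 t)) as [|Hle]; auto. exfalso.
  assert (Hneg : Lap x0 t < 0).
  { pose proof (Lap_ne x0 t (K_of_Om x0 Hx0) Ht). lra. }
  assert (Htp : 0 < t).
  { destruct (Req_dec t 0) as [->|]; [unfold Lap in Hneg; lra|lra]. }
  set (c := fun s => Rmax 0 (Rmin s t)).
  assert (Hc0 : forall s, 0 <= c s) by (intros; unfold c; apply Rmax_l).
  set (f := fun s => - Lap x0 (c s)).
  assert (Cf : continuity f).
  { intros s. unfold continuity_pt, continue_in, limit1_in, limit_in. intros eps He.
    destruct (Lap_cont x0 (c s) (conj (K_of_Om x0 Hx0) (Hc0 s)) eps He) as [d [Hd Hcd]].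
    exists d. split; auto. intros s' [_ Hs']. simpl in *. unfold R_dist in *.
    unfold f. replace (- Lap x0 (c s') - - Lap x0 (c s)) with (-(Lap x0 (c s') - Lap x0 (c s))) by ring.
    rewrite Rabs_Ropp. apply Hcd. split; auto. apply K_of_Om; auto.
    unfold ball_sq; rewrite !Rminus_diag, Rabs_R0; lra.
    eapply Rle_lt_trans; [apply clamp_lip; lra|auto]. }
  assert (c0 : c 0 = 0). { unfold c, Rmax, Rmin; repeat destruct Rle_dec; lra. }
  assert (ct : c t = t). { unfold c, Rmax, Rmin; repeat destruct Rle_dec; lra. }
  destruct (IVT f 0 t Cf Htp) as [z [Hz Hfz]].
  { unfold f. rewrite c0. unfold Lap. lra. }
  { unfold f. rewrite ct. lra. }
  unfold f in Hfz. apply (Lap_ne x0 (c z) (K_of_Om x0 Hx0) (Hc0 z)). lra.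
Qed.

Lemma Lap_pos x t : Omega x -> 0 <= t -> 0 < Lap x t.
Proof.
  intros Hx Ht. destruct (Rlt_le_dec 0 (Lap x t)) as [|Hle]; auto. exfalso.
  destruct HOm as (_&_&Hcon&_). apply Hcon.
  exists (fun z => Omega z /\ 0 < Lap z t), (fun z => Omega z /\ Lap z t < 0).
  split; [|split; [|split; [|split; [|split]]]].
  - intros z [Hz Hp]. destruct (Om_open z Hz) as [r [Hr Hro]].
    destruct (pos_near Lap z t Lap_cont (conj (K_of_Om z Hz) Ht) Hp) as [d [Hd Hn]].
    exists (Rmin r d). split. apply Rmin_pos; auto.
    intros y [B1 B2]. pose proof (Rmin_l r d). pose proof (Rmin_r r d).
    assert (Omega y) by (apply Hro; split; lra). split; auto.
    apply Hn. split; auto. apply K_of_Om; auto. split; lra.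
  - intros z [Hz Hp]. destruct (Om_open z Hz) as [r [Hr Hro]].
    assert (Cm : cont_on3 DD (fun x t => -1 * Lap x t)) by (apply c3_scal, Lap_cont).
    destruct (pos_near _ z t Cm (conj (K_of_Om z Hz) Ht) ltac:(lra)) as [d [Hd Hn]].
    exists (Rmin r d). split. apply Rmin_pos; auto.
    intros y [B1 B2]. pose proof (Rmin_l r d). pose proof (Rmin_r r d).
    assert (Omega y) by (apply Hro; split; lra). split; auto.
    assert (0 < -1 * Lap y t); [|lra].
    apply Hn. split; auto. apply K_of_Om; auto. split; lra.
  - intros z Hz. pose proof (Lap_ne z t (K_of_Om z Hz) Ht).
    destruct (Rlt_le_dec 0 (Lap z t)); [left|right]; split; auto; lra.
  - exists x0. split; auto. split; auto. apply Lap_x0; auto.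
  - exists x. split; auto. split; auto. pose proof (Lap_ne x t (K_of_Om x Hx) Ht). lra.
  - intros z _ [_ A] [_ B]. lra.
Qed.

Lemma C2near_u x t r : 0 < t -> (forall y, ball_sq x y r -> Omega y) ->
  C2near (fun y => u y t) (fun y => u1 y t) (fun y => u2 y t) (fun y => u11 y t) (fun y => u12 y t) (fun y => u22 y t) x r.
Proof.
  intros Ht Hb y Hy. pose proof (Hb y Hy) as Oy.
  destruct (Hu_d y t Oy Ht) as (_&A1&A2&A3&A4&A5&A6).
  destruct Hu_c as (_&_&C1&C2&C11&C12&C22).
  refine (conj A1 (conj A2 (conj A3 (conj A4 (conj A5 (conj A6 (conj _ (conj _ (conj _ (conj _ _))))))))));
  apply contpt3; auto; lra.
Qed.

Lemma C2near_U x r : (forall y, ball_sq x y r -> Omega y) ->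
  C2near U U1 U2 U11 U12 U22 x r.
Proof.
  intros Hb y Hy. pose proof (Hb y Hy) as Oy.
  destruct HU as [Hd [C0 [C1 [C2 [C11 [C12 C22]]]]]].
  destruct (Hd y Oy) as (A1&A2&A3&A4&A5&A6).
  refine (conj A1 (conj A2 (conj A3 (conj A4 (conj A5 (conj A6 (conj _ (conj _ (conj _ (conj _ _))))))))));
  apply contpt2; auto.
Qed.

Lemma imax alpha eta (h hd : R -> R) T x t : 0 <= T -> T < t -> Omega x ->
  (forall s, derivable_pt_lim h s (hd s)) ->
  (forall y s, closure2 Omega y -> T <= s <= t ->
     alpha*(u y s - U y) + eta*q y + h s <= alpha*(u x t - U x) + eta*q x + h t) ->
  0 <= alpha * ut x t + hd t /\
  forall v1 v2, alpha * ((v1*(v1*u11 x t + v2*u12 x t) + v2*(v1*u12 x t + v2*u22 x t))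
     - (v1*(v1*U11 x + v2*U12 x) + v2*(v1*U12 x + v2*U22 x))) + eta * (2*v1*v1 + 2*v2*v2) <= 0.
Proof.
  intros HT Htt Hx Dh Hmax. split.
  - destruct (Hu_d x t Hx ltac:(lra)) as (Dt&_).
    assert (D := dlim_lin3 (fun s => u x s) h (fun _ => 0) t (ut x t) (hd t) 0 alpha 1 0
                  (eta * q x - alpha * U x) Dt (Dh t) (derivable_pt_lim_const 0 t)).
    apply (dlim_left_max _ t _ (t - T)) in D; [lra|lra|].
    intros s Hs. pose proof (Hmax x s (K_of_Om x Hx) ltac:(lra)). lra.
  - intros v1 v2.
    destruct (Om_open x Hx) as [r [Hr Hro]].
    destruct (line2 _ _ _ _ _ _ x r v1 v2 Hr (C2near_u x t r ltac:(lra) Hro)) as [du [Hdu [Du1 Du2]]].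
    destruct (line2 _ _ _ _ _ _ x r v1 v2 Hr (C2near_U x r Hro)) as [dU [HdU [DU1 DU2]]].
    destruct (line2 _ _ _ _ _ _ x r v1 v2 Hr (q_C2 x r)) as [dq [Hdq [Dq1 Dq2]]].
    destruct (lineball x v1 v2 r Hr) as [db [Hdb Hb]].
    set (d := Rmin (Rmin du dU) (Rmin dq db)).
    assert (Hd : 0 < d) by (unfold d; repeat apply Rmin_pos; auto).
    assert (Hdd : forall s, Rabs s < d -> Rabs s < du /\ Rabs s < dU /\ Rabs s < dq /\ Rabs s < db).
    { intros s Hs. unfold d in Hs. pose proof (Rmin_l (Rmin du dU) (Rmin dq db)).
      pose proof (Rmin_r (Rmin du dU) (Rmin dq db)). pose proof (Rmin_l du dU).
      pose proof (Rmin_r du dU). pose proof (Rmin_l dq db). pose proof (Rmin_r dq db). lra. }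
    set (P := fun s => (fst x + s*v1, snd x + s*v2)).
    set (g := fun s => alpha * u (P s) t + (-alpha) * U (P s) + eta * q (P s) + h t).
    set (g' := fun s => alpha * (v1 * u1 (P s) t + v2 * u2 (P s) t) + (-alpha) * (v1 * U1 (P s) + v2 * U2 (P s))
                  + eta * (v1 * (2*fst (P s)) + v2 * (2*snd (P s))) + 0).
    assert (HP0 : P 0 = x). { unfold P. destruct x; simpl; f_equal; ring. }
    assert (C : alpha * (v1 * (v1 * u11 x t + v2 * u12 x t) + v2 * (v1 * u12 x t + v2 * u22 x t)) +
                (-alpha) * (v1 * (v1 * U11 x + v2 * U12 x) + v2 * (v1 * U12 x + v2 * U22 x)) +
                eta * (v1 * (v1 * 2 + v2 * 0) + v2 * (v1 * 0 + v2 * 2)) <= 0).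
    { apply (second_test g g' _ d Hd).
      - intros s Hs. destruct (Hdd s Hs) as (H1&H2&H3&H4).
        eapply dlim_val; [|apply (dlim_lin3 _ _ _ s _ _ _ alpha (-alpha) eta (h t) (Du1 s H1) (DU1 s H2) (Dq1 s H3))].
        unfold g', P. ring.
      - unfold g'. apply (dlim_lin3 _ _ _ 0 _ _ _ alpha (-alpha) eta 0 Du2 DU2 Dq2).
      - intros s Hs. destruct (Hdd s Hs) as (H1&H2&H3&H4).
        unfold g. rewrite HP0.
        assert (Hm := Hmax (P s) t (K_of_Om _ (Hro _ (Hb s H4))) ltac:(lra)). lra. }
    lra.
Qed.

Lemma div_nonneg a b : 0 <= a -> 0 < b -> 0 <= a / b.
Proof. intros. unfold Rdiv. apply Rmult_le_pos; auto. left; apply Rinv_0_lt_compat; auto. Qed.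

Lemma exp_le1 y : y <= 0 -> exp y <= 1.
Proof.
  intros H. destruct (Req_dec y 0) as [->|]. rewrite exp_0; lra.
  rewrite <- exp_0. left. apply exp_increasing. lra.
Qed.

Lemma exp_decay y : 0 <= y -> exp (- y) * (1 + y) <= 1.
Proof.
  intros H. assert (E : exp (-y) * exp y = 1) by (rewrite <- exp_plus; replace (-y + y) with 0 by ring; apply exp_0).
  pose proof (exp_pos (-y)).
  destruct (Req_dec y 0) as [->|]. rewrite Ropp_0, exp_0. lra.
  pose proof (exp_ineq1 y H1). nra.
Qed.

Lemma barrier alpha eta e A k T :
  (alpha = 1 \/ alpha = -1) -> 0 < e -> 0 <= eta -> 0 < k -> 0 <= A -> 0 <= T ->
  (forall x, closure2 Omega x -> 0 <= eta * q x <= e/4) ->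
  (forall t, T <= t -> forall x, boundary2 Omega x -> Rabs (u x t - U x) <= e/4) ->
  (forall x, closure2 Omega x -> alpha*(u x T - U x) + eta * q x <= A) ->
  (forall x t, Omega x -> T < t -> forall gt, 0 <= gt <= A -> 0 <= alpha * ut x t + k * gt ->
     (forall v1 v2, alpha * ((v1*(v1*u11 x t + v2*u12 x t) + v2*(v1*u12 x t + v2*u22 x t))
     - (v1*(v1*U11 x + v2*U12 x) + v2*(v1*U12 x + v2*U22 x))) + eta * (2*v1*v1 + 2*v2*v2) <= 0) -> False) ->
  exists T', forall t, T' <= t -> forall x, closure2 Omega x -> alpha * (u x t - U x) <= e.
Proof.
  intros Hal He Heta Hk HA HT Hq Hbd Hinit Hint.
  set (g := fun s => A * exp (- k * (s - T))).
  set (h := fun s => - g s - e/2).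
  set (hd := fun s => k * g s).
  assert (Dg : forall s, derivable_pt_lim (fun s => exp (-k*(s-T))) s (-k * exp(-k*(s-T)))).
  { intros s. pose proof (derivable_pt_lim_comp (fun s => 0*s*s + (-k)*s + k*T) exp s _ _
       (dpoly 0 (-k) (k*T) s) (derivable_pt_lim_exp _)) as H.
    eapply dlim_val; [|eapply dlim_ext; [|exact H]].
    - unfold comp. replace (0*s*s + -k*s + k*T) with (-k*(s-T)) by ring. ring.
    - intros z. unfold comp. f_equal. ring. }
  assert (Dh : forall s, derivable_pt_lim h s (hd s)).
  { intros s. eapply dlim_val; [|eapply dlim_ext; [|apply (dlim_lin3 _ _ _ s _ _ _ (-A) 0 0 (-e/2) (Dg s) (derivable_pt_lim_const 0 s) (derivable_pt_lim_const 0 s))]].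
    - unfold hd, g. ring.
    - intros z. unfold h, g, fct_cte. lra. }
  assert (Hg : forall s, T <= s -> 0 <= g s <= A).
  { intros s Hs. unfold g. pose proof (exp_pos (-k*(s-T))). pose proof (exp_le1 (-k*(s-T)) ltac:(nra)).
    split; nra. }
  set (W := fun y s => alpha*(u y s - U y) + eta*q y + h s).
  destruct K_bound as [M [HM0 HM]].
  assert (Hal1 : forall z, alpha * z <= Rabs z).
  { intros z. destruct Hal as [->| ->]. rewrite Rmult_1_l. apply Rle_abs.
    rewrite <- Rabs_Ropp. replace (-1 * z) with (- z) by ring. apply Rle_abs. }
  assert (Wneg : forall t1, T <= t1 -> forall y s, closure2 Omega y -> T <= s <= t1 -> W y s <= 0).
  { intros t1 Ht1.
    assert (CW : cont_on3 (fun x t => closure2 Omega x /\ T <= t <= t1) W).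
    { destruct Hu_c as (Cu&_).
      destruct HU as (_&CU&_).
      assert (Sub : forall x t, closure2 Omega x /\ T <= t <= t1 -> DD x t).
      { intros x t [A1 A2]. split; auto; lra. }
      apply c3_plus. apply c3_plus. apply c3_scal. apply c3_minus.
      - apply (c3_sub DD); auto.
      - apply (c3_of2 _ (closure2 Omega)); auto. intros x t [A1 _]; auto.
      - apply c3_scal. unfold q. apply c3_plus; apply c3_mult; try apply c3_fst; apply c3_snd.
      - apply c3_oft. intros t e0 He0. apply (dlim_cont h t (hd t) (Dh t) e0 He0). }
    destruct (EVT_max (closure2 Omega) M HM (closure_closed Omega) T t1 Ht1 W CW (ex_intro _ x0 (K_of_Om x0 Hx0)))
      as [xs [ts [Hxs [Hts Hmax]]]].
    intros y s Hy Hs. eapply Rle_trans; [apply Hmax; auto|].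
    destruct (Rle_lt_dec (W xs ts) 0) as [|Hpos]; auto. exfalso.
    destruct (classic (boundary2 Omega xs)) as [Hb|Hnb].
    { specialize (Hbd ts ltac:(lra) xs Hb). pose proof (Hal1 (u xs ts - U xs)).
      pose proof (Hq xs Hxs). pose proof (Hg ts ltac:(lra)). unfold W, h in Hpos. lra. }
    pose proof (K_Om xs Hxs Hnb) as Oxs.
    destruct (Req_dec ts T) as [->|HtT].
    { pose proof (Hinit xs Hxs). unfold W, h, g in Hpos. rewrite Rminus_diag, Rmult_0_r, exp_0 in Hpos. lra. }
    destruct (imax alpha eta h hd T xs ts HT ltac:(lra) Oxs Dh) as [F1 F2].
    { intros y0 s0 Hy0 Hs0. apply (Hmax y0 s0 Hy0). lra. }
    apply (Hint xs ts Oxs ltac:(lra) (g ts) (Hg ts ltac:(lra))); auto. }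
  exists (T + 2 * A / (k * e)). intros t Ht x Hx.
  assert (H2 : 0 <= 2 * A / (k * e)) by (apply div_nonneg; nra).
  pose proof (Wneg t ltac:(lra) x t Hx ltac:(lra)) as Hw. unfold W, h in Hw.
  pose proof (Hq x Hx).
  assert (g t <= e/2).
  { unfold g. set (y := k * (t - T)).
    assert (Hy : 2 * A / e <= y).
    { unfold y. assert (2 * A / (k * e) * k = 2 * A / e) by (field; lra). nra. }
    assert (Hy0 : 0 <= y) by (assert (0 <= 2 * A / e) by (apply div_nonneg; lra); lra).
    replace (- k * (t - T)) with (- y) by (unfold y; ring).
    pose proof (exp_decay y Hy0). pose proof (exp_pos (-y)).
    assert (2 * A / e * e = 2 * A) by (field; lra).
    assert (A * exp (-y) * (1 + y) <= A) by nra.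
    assert (A <= e/2 * (1 + y)) by nra.
    nra. }
  lra.
Qed.

Lemma abs_le_inv z M : Rabs z <= M -> -M <= z <= M.
Proof. intros H. destruct (Rcase_abs z) as [Hn|Hp]; [rewrite Rabs_left in H|rewrite Rabs_right in H]; lra. Qed.

Definition P0 := fun x (t:R) => closure2 Omega x /\ 0 <= t <= 0.

Lemma EVT_K (f : pt -> R -> R) : cont_on3 P0 f ->
  exists xm, closure2 Omega xm /\ forall y, closure2 Omega y -> f y 0 <= f xm 0.
Proof.
  intros C. destruct K_bound as [M [_ HM]].
  destruct (EVT_max (closure2 Omega) M HM (closure_closed Omega) 0 0 (Rle_refl 0) f C (ex_intro _ x0 (K_of_Om x0 Hx0))) as [xm [tm [Hxm [Htm Hmax]]]].
  assert (tm = 0) by lra. subst. exists xm. split; auto.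
Qed.

Lemma cU (G : pt -> R) : cont_on2 (closure2 Omega) G -> cont_on3 P0 (fun x t => G x).
Proof. intros C. apply (c3_of2 _ (closure2 Omega)); auto. intros x t [A _]; auto. Qed.

Lemma cfix F T : cont_on3 DD F -> 0 <= T -> cont_on3 P0 (fun x t => F x T).
Proof.
  intros C HT x t [Hx _] e He. destruct (C x T (conj Hx HT) e He) as [d [Hd Hc]].
  exists d. split; auto. intros y s [Hy _] Hb _. apply Hc; auto. split; auto. rewrite Rminus_diag, Rabs_R0; lra.
Qed.

Lemma cq : cont_on3 P0 (fun x t => q x).
Proof. unfold q. apply c3_plus; apply c3_mult; try apply c3_fst; apply c3_snd. Qed.

Lemma consts : exists dmin Lmin Lmax, 0 < dmin /\ 0 < Lmin /\ 0 < Lmax /\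
  forall x, closure2 Omega x -> dmin <= U11 x * U22 x - U12 x * U12 x /\ Lmin <= U11 x + U22 x /\ U11 x + U22 x <= Lmax.
Proof.
  destruct HU as (_&_&_&_&C11&C12&C22).
  destruct (EVT_K (fun x t => -1 * (U11 x * U22 x - U12 x * U12 x))) as [xa [Hxa Ha]].
  { apply c3_scal. apply c3_minus; apply c3_mult; apply cU; auto. }
  destruct (EVT_K (fun x t => -1 * (U11 x + U22 x))) as [xb [Hxb Hb]].
  { apply c3_scal. apply c3_plus; apply cU; auto. }
  destruct (EVT_K (fun x t => U11 x + U22 x)) as [xc [Hxc Hc]].
  { apply c3_plus; apply cU; auto. }
  destruct (pd_facts _ _ _ (Hconv xa Hxa)) as (A1&A2&A3).
  destruct (pd_facts _ _ _ (Hconv xb Hxb)) as (B1&B2&B3).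
  destruct (pd_facts _ _ _ (Hconv xc Hxc)) as (C1'&C2'&C3').
  exists (U11 xa * U22 xa - U12 xa * U12 xa), (U11 xb + U22 xb), (U11 xc + U22 xc).
  split; [lra|split; [lra|split; [lra|]]].
  intros x Hx. specialize (Ha x Hx). specialize (Hb x Hx). specialize (Hc x Hx). cbv beta in *. lra.
Qed.

Lemma qbound : exists Mq, 0 < Mq /\ forall x, closure2 Omega x -> 0 <= q x <= Mq.
Proof.
  destruct K_bound as [M [HM0 HM]]. exists (2*M*M+1). split. nra.
  intros x Hx. destruct (HM x Hx) as [A B]. apply abs_le_inv in A. apply abs_le_inv in B.
  unfold q. split; nra.
Qed.

Lemma upper e : 0 < e -> exists T', forall t, T' <= t -> forall x, closure2 Omega x -> u x t - U x <= e.
Proof.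
  intros He.
  destruct consts as (dmin&Lmin&Lmax&Hd&HLm&HLM&Hc).
  destruct qbound as [Mq [HMq HqM]].
  set (eta := Rmin (Lmin/4) (e/(4*Mq))).
  assert (Heta : 0 < eta) by (apply Rmin_pos; [lra|apply Rdiv_lt_0_compat; lra]).
  assert (Heta1 : eta <= Lmin/4) by apply Rmin_l.
  assert (Heta2 : eta * Mq <= e/4).
  { assert (eta <= e/(4*Mq)) by apply Rmin_r.
    assert (e / (4*Mq) * Mq = e/4) by (field; lra). nra. }
  set (c := Rmin dmin (eta*Lmin)).
  assert (Hc0 : 0 < c) by (apply Rmin_pos; nra).
  assert (Hc1 : c <= dmin) by apply Rmin_l.
  assert (Hc2 : c <= eta * Lmin) by apply Rmin_r.
  destruct (HEc (c/3)) as [T1 HT1]. lra.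
  destruct (Hbdy (e/4)) as [T2 HT2]. lra.
  set (T := Rmax 1 (Rmax T1 T2)).
  assert (HT : 1 <= T /\ T1 <= T /\ T2 <= T).
  { unfold T. pose proof (Rmax_l 1 (Rmax T1 T2)). pose proof (Rmax_r 1 (Rmax T1 T2)).
    pose proof (Rmax_l T1 T2). pose proof (Rmax_r T1 T2). lra. }
  destruct (EVT_K (fun x t => u x T + -1 * U x + eta * q x)) as [xs [Hxs Hs]].
  { destruct Hu_c as (Cu&_). destruct HU as (_&CU&_).
    apply c3_plus. apply c3_plus. apply cfix; auto; lra. apply c3_scal, cU; auto.
    apply c3_scal, cq. }
  set (A := Rmax 0 (u xs T + -1 * U xs + eta * q xs)).
  assert (HA : 0 <= A) by apply Rmax_l.
  assert (HA2 : u xs T + -1 * U xs + eta * q xs <= A) by apply Rmax_r.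
  set (k := c / (3*(A+1)*(Lmax+1))).
  assert (Hk : 0 < k) by (apply Rdiv_lt_0_compat; nra).
  assert (HkA : k * A * Lmax <= c/3).
  { assert (k * (3*(A+1)*(Lmax+1)) = c) by (unfold k; field; nra). nra. }
  destruct (barrier 1 eta e A k T) as [T' HT']; auto; try lra.
  - intros x Hx. destruct (HqM x Hx). split; nra.
  - intros t Ht x Hb. apply (HT2 t ltac:(lra) x Hb).
  - intros x Hx. specialize (Hs x Hx). cbv beta in Hs. lra.
  - intros x t Hx Ht gt Hgt Hut Hv.
    pose proof (Lap_pos x t Hx ltac:(lra)) as HL. unfold Lap in HL.
    specialize (HT1 t ltac:(lra) x (K_of_Om x Hx)). apply abs_le_inv in HT1.
    destruct (Hc x (K_of_Om x Hx)) as (Hdx&HLx&HLx2).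
    pose proof (Hv 1 0) as Hv1. pose proof (Hv 0 1) as Hv2.
    assert (Hpsd : psd (U11 x - 2*eta - u11 x t) (U12 x - u12 x t) (U22 x - 2*eta - u22 x t)).
    { intros v1 v2. specialize (Hv v1 v2). lra. }
    assert (HLle : u11 x t + u22 x t <= Lmax) by lra.
    assert (Hdet : u11 x t * u22 x t - u12 x t * u12 x t <= U11 x * U22 x - U12 x * U12 x - c).
    { destruct (Rle_lt_dec (u11 x t * u22 x t - u12 x t * u12 x t) 0) as [Hn|Hp]; [lra|].
      pose proof (alg_up _ _ _ _ _ _ HL Hp Hpsd) as Hal.
      replace ((u11 x t + (U11 x - 2 * eta - u11 x t)) * (u22 x t + (U22 x - 2 * eta - u22 x t)) -
        (u12 x t + (U12 x - u12 x t)) * (u12 x t + (U12 x - u12 x t)))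
        with (U11 x * U22 x - U12 x * U12 x - 2*eta*(U11 x + U22 x) + 4*eta*eta) in Hal by ring.
      nra. }
    assert (Hut2 : - ut x t <= k * A) by nra.
    assert (- ut x t * (u11 x t + u22 x t) <= c/3).
    { assert (- ut x t * (u11 x t + u22 x t) <= k * A * (u11 x t + u22 x t)) by nra.
      nra. }
    replace (u12 x t ^ 2) with (u12 x t * u12 x t) in HT1 by ring.
    replace (U12 x ^ 2) with (U12 x * U12 x) in HT1 by ring.
    lra.
  - exists T'. intros t Ht x Hx. specialize (HT' t Ht x Hx). lra.
Qed.

Lemma lower e : 0 < e -> exists T', forall t, T' <= t -> forall x, closure2 Omega x -> U x - u x t <= e.
Proof.
  intros He.
  destruct consts as (dmin&Lmin&Lmax&Hd&HLm&HLM&Hc).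
  destruct qbound as [Mq [HMq HqM]].
  set (eta := Rmin 1 (e/(4*Mq))).
  assert (Heta : 0 < eta) by (apply Rmin_pos; [lra|apply Rdiv_lt_0_compat; lra]).
  assert (Heta2 : eta * Mq <= e/4).
  { assert (eta <= e/(4*Mq)) by apply Rmin_r.
    assert (e / (4*Mq) * Mq = e/4) by (field; lra). nra. }
  set (mu := dmin / (Lmax + 4*eta)).
  assert (Hmu : 0 < mu) by (apply Rdiv_lt_0_compat; lra).
  assert (Hmu2 : mu * (Lmax + 4*eta) = dmin) by (unfold mu; field; lra).
  destruct (HEc (eta*eta)) as [T1 HT1]. nra.
  destruct (Hbdy (e/4)) as [T2 HT2]. lra.
  set (T := Rmax 1 (Rmax T1 T2)).
  assert (HT : 1 <= T /\ T1 <= T /\ T2 <= T).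
  { unfold T. pose proof (Rmax_l 1 (Rmax T1 T2)). pose proof (Rmax_r 1 (Rmax T1 T2)).
    pose proof (Rmax_l T1 T2). pose proof (Rmax_r T1 T2). lra. }
  destruct (EVT_K (fun x t => -1 * u x T + U x + eta * q x)) as [xs [Hxs Hs]].
  { destruct Hu_c as (Cu&_). destruct HU as (_&CU&_).
    apply c3_plus. apply c3_plus. apply c3_scal. apply cfix; auto; lra. apply cU; auto.
    apply c3_scal, cq. }
  set (A := Rmax 0 (-1 * u xs T + U xs + eta * q xs)).
  assert (HA : 0 <= A) by apply Rmax_l.
  assert (HA2 : -1 * u xs T + U xs + eta * q xs <= A) by apply Rmax_r.
  set (m := Rmin mu (eta*eta/(Lmax+4*eta))).
  assert (Hm : 0 < m) by (apply Rmin_pos; auto; apply Rdiv_lt_0_compat; nra).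
  assert (Hm1 : m <= mu) by apply Rmin_l.
  assert (Hm2 : m * (Lmax + 4*eta) <= eta*eta).
  { assert (m <= eta*eta/(Lmax+4*eta)) by apply Rmin_r.
    assert (eta*eta/(Lmax+4*eta) * (Lmax+4*eta) = eta*eta) by (field; lra). nra. }
  set (k := m / (A+1)).
  assert (Hk : 0 < k) by (apply Rdiv_lt_0_compat; lra).
  assert (HkA : k * A <= m).
  { assert (k * (A+1) = m) by (unfold k; field; lra). nra. }
  destruct (barrier (-1) eta e A k T) as [T' HT']; auto; try lra.
  - intros x Hx. destruct (HqM x Hx). split; nra.
  - intros t Ht x Hb. apply (HT2 t ltac:(lra) x Hb).
  - intros x Hx. specialize (Hs x Hx). cbv beta in Hs. lra.
  - intros x t Hx Ht gt Hgt Hut Hv.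
    pose proof (Lap_pos x t Hx ltac:(lra)) as HL. unfold Lap in HL.
    specialize (HT1 t ltac:(lra) x (K_of_Om x Hx)). apply abs_le_inv in HT1.
    destruct (Hc x (K_of_Om x Hx)) as (Hdx&HLx&HLx2).
    assert (Hpsd : psd (u11 x t - U11 x - 2*eta) (u12 x t - U12 x) (u22 x t - U22 x - 2*eta)).
    { intros v1 v2. specialize (Hv v1 v2). lra. }
    set (a := U11 x + 2*eta). set (b := U12 x). set (cc := U22 x + 2*eta).
    set (p := u11 x t - U11 x - 2*eta). set (qq := u12 x t - U12 x). set (r := u22 x t - U22 x - 2*eta).
    destruct (psd_facts p qq r Hpsd) as (Hp1&Hp2&Hp3).
    assert (Htr : 0 < a + cc) by (unfold a, cc; lra).
    assert (HdetN : dmin <= a*cc - b*b) by (unfold a, b, cc; nra).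
    assert (HtrN : a + cc <= Lmax + 4*eta) by (unfold a, cc; lra).
    set (cross := a*r + cc*p - 2*b*qq).
    assert (Hdm : u11 x t * u22 x t - u12 x t * u12 x t = (a*cc - b*b) + cross + (p*r - qq*qq))
      by (unfold cross, a, b, cc, p, qq, r; ring).
    assert (HLs : u11 x t + u22 x t = (a + cc) + (p + r)) by (unfold a, cc, p, r; ring).
    assert (HdetN2 : U11 x * U22 x - U12 x * U12 x + 4*eta*eta <= a*cc - b*b) by (unfold a, b, cc; nra).
    pose proof (alg_low a b cc p qq r Htr ltac:(lra) Hpsd) as Hlow.
    fold cross in Hlow.
    clearbody cross a b cc p qq r.
    assert (Hcross : mu * (p + r) <= cross).
    { assert (dmin * (p + r) <= (a*cc - b*b) * (p + r)) by (apply Rmult_le_compat_r; lra).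
      assert (0 <= cross).
      { destruct (Rle_lt_dec 0 cross) as [|Hn]; auto.
        assert ((a + cc) * cross < 0) by nra.
        assert (0 <= (a*cc - b*b) * (p + r)) by (apply Rmult_le_pos; lra). lra. }
      assert ((a + cc) * cross <= (Lmax + 4*eta) * cross) by (apply Rmult_le_compat_r; lra).
      assert (mu * (p + r) * (Lmax + 4*eta) <= cross * (Lmax + 4*eta)).
      { replace (mu * (p + r) * (Lmax + 4*eta)) with (dmin * (p + r)) by (rewrite <- Hmu2; ring). lra. }
      apply Rmult_le_reg_r with (Lmax + 4*eta); lra. }
    assert (Hut2 : ut x t <= k * A) by nra.
    assert (Hterm : - ut x t * (u11 x t + u22 x t) >= - (k * A) * (u11 x t + u22 x t)) by nra.
    replace (u12 x t ^ 2) with (u12 x t * u12 x t) in HT1 by ring.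
    replace (U12 x ^ 2) with (U12 x * U12 x) in HT1 by ring.
    assert (k * A * (a + cc) <= eta*eta) by nra.
    assert (k * A * (p + r) <= mu * (p + r)) by nra.
    nra.
  - exists T'. intros t Ht x Hx. specialize (HT' t Ht x Hx). lra.
Qed.

Lemma final : forall e, 0 < e -> exists T, forall t, T <= t ->
    forall x, closure2 Omega x -> Rabs (u x t - U x) <= e.
Proof.
  intros e He. destruct (upper e He) as [T1 H1]. destruct (lower e He) as [T2 H2].
  exists (Rmax T1 T2). intros t Ht x Hx.
  pose proof (Rmax_l T1 T2). pose proof (Rmax_r T1 T2).
  specialize (H1 t ltac:(lra) x Hx). specialize (H2 t ltac:(lra) x Hx).
  apply Rabs_le. lra.
Qed.
End Main.

Theorem theorem1p1
  (Omega : pt -> Prop) (HOm : bounded_domain Omega)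
  (u ut u1 u2 u11 u12 u22 : pt -> R -> R)
  (Hu : C21_closure Omega u ut u1 u2 u11 u12 u22)
  (HE2 : forall x t, closure2 Omega x -> 0 <= t ->
     0 < - ut x t * (u11 x t + u22 x t) + (u11 x t * u22 x t - u12 x t ^ 2))
  (U U1 U2 U11 U12 U22 : pt -> R)
  (HU : C2_closure Omega U U1 U2 U11 U12 U22)
  (Hconv : forall x, closure2 Omega x -> pos_def2 (U11 x) (U12 x) (U22 x))
  (x0 : pt) (Hx0 : Omega x0) (Hlap : 0 < u11 x0 0 + u22 x0 0)
  (Hbd : forall e, 0 < e -> exists T, forall t, T <= t ->
     forall x, boundary2 Omega x -> Rabs (u x t - U x) <= e)
  (HEc : forall e, 0 < e -> exists T, forall t, T <= t ->
     forall x, closure2 Omega x ->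
       Rabs ((- ut x t * (u11 x t + u22 x t) + (u11 x t * u22 x t - u12 x t ^ 2))
             - (U11 x * U22 x - U12 x ^ 2)) <= e) :
  forall e, 0 < e -> exists T, forall t, T <= t ->
    forall x, closure2 Omega x -> Rabs (u x t - U x) <= e.
Proof.
  exact (final Omega HOm u ut u1 u2 u11 u12 u22 Hu HE2 U U1 U2 U11 U12 U22 HU Hconv x0 Hx0 Hlap Hbd HEc).
Qed.
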